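(* Assume the setup described in the context, and assume moreover that $\sup_d|\lambda_d|\ll(\log X)^{k/2}$. Then for every $\epsilon>0$, \[\sum_{\substack{X<n\le 2X\\ n\equiv v_0\pmod W}}w_n=\frac{X}{W}\sum_{d,e}\lambda_d\lambda_e\prod_{p\mid de}\frac{\nu(p)}{p}+O\bigl(X^{1/5+\epsilon}\bigr).\]
   Context: Let $X$ be sufficiently large. Let $p_0\in[(\log\log X)/2,X]$ be a prime such that for every $\epsilon>0$, $\sum_{q<X^{1/2-\epsilon},(q,p_0)=1}\sup_{(a,q)=1,\,x'\le X}|\pi(x';q,a)-\pi(x')/\phi(q)|\ll_\epsilon X\exp(-c_0\sqrt{\log X})$ for an absolute $c_0>0$. Let $k\le(\log X)^{1/5}$ and let $\mathcal{L}=\{L_1,\dots,L_k\}$ be distinct linear functions $L_i(n)=a_in+b_i$ with integer coefficients $0<a_i\le(\log X)^{1/3}$, $\gcd(2p_0,a_i)=1$, $0<b_i<X$, which are $\langle P_3\rangle$-admissible: for every prime $p\equiv3\pmod4$ there is $n_p$ with $p\nmid\prod_iL_i(n_p)$. Let $\langle P_3\rangle$ (resp. $\langle P_1\rangle$) be the set of positive integers all of whose prime factors are $\equiv3\pmod4$ (resp. $\equiv1\pmod4$). Let $W=\prod_{p\le2(\log X)^{1/3},\,p\equiv3\ (4),\,p\ne p_0}p$, and let $v_0$ be an integer with $\gcd(L_j(v_0),W)=1$ for all $j$. For primes $p$ let $\nu(p)=\#\{1\le n<p:\prod_{i=1}^kL_i(n)\equiv0\pmod p\}$. Let $\lambda_d$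 be real numbers with $\lambda_d=0$ whenever $d>X^{1/10}$, or $d$ is not squarefree, or $d\notin\langle P_3\rangle$, or $\gcd(d,p_0W)\neq1$. Define $w_n=\bigl(\sum_{d\mid\prod_{i=1}^kL_i(n)}\lambda_d\bigr)^2$ if $n\equiv v_0\pmod W$, and $w_n=0$ otherwise. *)

(* Defs.v *)
From mathcomp Require Import all_boot all_order all_algebra.
From mathcomp Require Import all_classical all_reals all_analysis.
Set Implicit Arguments. Unset Strict Implicit. Unset Printing Implicit Defensive.
Import Order.TTheory GRing.Theory Num.Theory.
Definition squarefree (d : nat) : bool :=
  (0 < d)%N && all (fun p => ~~ (p * p %| d)) (primes d).

Definition inP3 (d : nat) : bool :=
  (0 < d)%N && all (fun p => p %% 4 == 3)%N (primes d).

(* A linear form a n + b is represented by the pair (a, b). *)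
Definition Ln (ab : nat * nat) (n : nat) : nat := (ab.1 * n + ab.2)%N.
Definition Lz (ab : nat * nat) (n : int) : int := (ab.1%:Z * n + ab.2%:Z)%R.
Definition prodLn (Ls : seq (nat * nat)) (n : nat) : nat := (\prod_(ab <- Ls) Ln ab n)%N.
Definition prodLz (Ls : seq (nat * nat)) (n : int) : int := (\prod_(ab <- Ls) Lz ab n)%R.

Definition P3_admissible (Ls : seq (nat * nat)) : Prop :=
  forall p : nat, prime p -> (p %% 4 = 3)%N ->
    exists n : int, ~~ (p%:Z %| prodLz Ls n)%Z.

Definition nu (Ls : seq (nat * nat)) (p : nat) : nat :=
  count (fun n => p %| prodLn Ls n)%N (iota 0 p).

Local Open Scope ring_scope.

Definition Wof {R : realType} (B : R) (p0 : nat) : nat :=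
  (\prod_(p < (Num.truncn B).+1 | prime p && (p %% 4 == 3)%N && (nat_of_ord p != p0)
                                   && (p%:R <= B)%R) p)%N.

Definition primepi (x : nat) : nat := count prime (iota 0 x.+1).
Definition primepi_ap (x q a : nat) : nat :=
  count (fun p => prime p && (p %% q == a %% q)%N) (iota 0 x.+1).

(* sup over (a,q)=1 and real x' <= X of |pi(x';q,a) - pi(x')/phi(q)|;
   pi(x') = pi(floor x') and is 0 for x' < 2, so it suffices to take
   integer x' in [0, floor X]. *)
Definition BVerr {R : realType} (X : R) (q : nat) : R :=
  \big[Num.max/0]_(a < q | coprime a q)
    \big[Num.max/0]_(x < (Num.truncn X).+1)
      `| (primepi_ap x q a)%:R - (primepi x)%:R / (totient q)%:R |.

Definition wn {R : realType} (Ls : seq (nat * nat)) (W : nat) (v0 : int)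
    (lam : nat -> R) (n : nat) : R :=
  if (n%:Z == v0 %[mod W%:Z])%Z
  then (\sum_(d <- divisors (prodLn Ls n)) lam d) ^+ 2
  else 0.

(* Main.v *)
Require Import Defs.
From mathcomp Require Import all_boot all_order all_algebra.
From mathcomp Require Import all_classical all_reals all_analysis.
From mathcomp Require Import ring lra.
Set Implicit Arguments. Unset Strict Implicit. Unset Printing Implicit Defensive.
Import Order.TTheory GRing.Theory Num.Theory.

Definition wn' {R : archiRealFieldType} (Ls : seq (nat * nat)) (W : nat) (v0 : int)
    (lam : nat -> R) (n : nat) : R :=
  if (n%:Z == v0 %[mod W%:Z])%Z
  then ((\sum_(d <- divisors (prodLn Ls n)) lam d) ^+ 2)%R
  else 0%R.

Definition per (A : pred nat) (a : nat) := forall n, A n = A (n %% a).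
Definition cnt (A : pred nat) (T : nat) : nat := \sum_(n < T) (A n : nat).


Lemma cnt_split A m n : cnt A (m + n) = cnt A m + \sum_(i < n) (A (m + i) : nat).
Proof. by rewrite /cnt big_split_ord. Qed.

Lemma cnt_mono A m n : m <= n -> cnt A m <= cnt A n.
Proof. by move=> /subnKC <-; rewrite cnt_split leq_addr. Qed.

Lemma cnt_per_add A a T : per A a -> cnt A (a + T) = cnt A a + cnt A T.
Proof.
move=> pA; rewrite cnt_split; congr (_ + _); apply: eq_bigr => i _.
by rewrite pA modnDl -pA.
Qed.

Lemma cnt_per_mul A a q r : per A a -> cnt A (q * a + r) = q * cnt A a + cnt A r.
Proof.
move=> pA; elim: q => [|q IH]; first by rewrite !mul0n.
by rewrite mulSn -addnA cnt_per_add // IH mulSn addnA.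
Qed.

Lemma cnt_div A a T : per A a ->
  cnt A T = T %/ a * cnt A a + cnt A (T %% a).
Proof. by move=> pA; rewrite {1}(divn_eq T a) cnt_per_mul. Qed.

Lemma crt_count a b (A B : pred nat) : 0 < a -> 0 < b -> coprime a b ->
  per A a -> per B b ->
  cnt (fun n => A n && B n) (a * b) = cnt A a * cnt B b.
Proof.
move=> a0 b0 cab pA pB.
have ltab : forall x y, chinese a b x y %% (a * b) < a * b.
  by move=> x y; rewrite ltn_mod muln_gt0 a0.
pose h (u : 'I_a * 'I_b) : 'I_(a * b) := Ordinal (ltab u.1 u.2).
have hA u : (h u : nat) %% a = u.1.
  by rewrite /= modn_dvdm ?dvdn_mulr // chinese_modl // modn_small.
have hB u : (h u : nat) %% b = u.2.
  by rewrite /= modn_dvdm ?dvdn_mull // chinese_modr // modn_small.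
have hinj : injective h.
  move=> [x y] [x' y'] e; have e1 := hA (x, y); have e2 := hB (x, y).
  rewrite e in e1 e2; rewrite hA in e1; rewrite hB in e2.
  by simpl in e1, e2; congr pair; apply: val_inj.
have hbij : bijective h.
  by apply: inj_card_bij => //; rewrite card_prod !card_ord.
rewrite /cnt (reindex h); last by apply: onW_bij.
rewrite big_distrl /=.
rewrite (eq_bigr (fun i : 'I_a => \sum_(j < b) (A i : nat) * (B j : nat))); last first.
  by move=> i _; rewrite big_distrr.
rewrite pair_big; apply: eq_bigr => [[x y]] _ /=.
have := hA (x, y); have := hB (x, y); rewrite /= => e2 e1.
by rewrite pA e1 pB e2 /=; case: (A x); case: (B y).
Qed.
Lemma prod_primes_dvd (ps : seq nat) x : uniq ps -> all prime ps ->
  (\prod_(p <- ps) p %| x) = all (fun p => p %| x) ps.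
Proof.
elim: ps => [|p ps IH] /=; first by rewrite big_nil dvd1n.
move=> /andP[pnin u] /andP[pp aps].
rewrite big_cons Gauss_dvd ?IH //.
rewrite prime_coprime // Euclid_dvd_prod // big_has.
apply/hasP => -[q qin]; rewrite dvdn_prime2 //; last by move/allP: aps; apply.
by move/eqP => epq; rewrite epq qin in pnin.
Qed.

Lemma sqfree_prod d : squarefree d -> d = \prod_(p <- primes d) p.
Proof.
move=> /andP[d0 /allP sq].
rewrite {1}(prod_prime_decomp d0) prime_decompE big_map.
apply: eq_big_seq => p pin /=.
have pp : prime p by move: pin; rewrite mem_primes => /andP[].
suff -> : logn p d = 1 by rewrite expn1.
apply/eqP; rewrite eqn_leq; rewrite logn_gt0 pin andbT.
rewrite leqNgt; apply/negP => h.
have := sq p pin; rewrite mulnn pfactor_dvdn //.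
by rewrite h.
Qed.

Lemma primes_prime d p : p \in primes d -> prime p.
Proof. by rewrite mem_primes => /andP[]. Qed.

Lemma sqfree_dvd d x : squarefree d ->
  (d %| x) = all (fun p => p %| x) (primes d).
Proof.
move=> sq; rewrite {1}(sqfree_prod sq) prod_primes_dvd ?primes_uniq //.
by apply/allP => p; apply: primes_prime.
Qed.
Lemma Ln_mod ab n p : Ln ab n = Ln ab (n %% p) %[mod p].
Proof. by rewrite /Ln -modnDml -modnMmr modnDml. Qed.

Lemma prodLn_mod Ls n p : prodLn Ls n = prodLn Ls (n %% p) %[mod p].
Proof.
rewrite /prodLn; elim: Ls => [|ab Ls IH]; first by rewrite !big_nil.
by rewrite !big_cons -modnMml Ln_mod modnMml -modnMmr IH modnMmr.
Qed.

Lemma prodLn_dvd_mod Ls n p : (p %| prodLn Ls n) = (p %| prodLn Ls (n %% p)).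
Proof. by rewrite /dvdn prodLn_mod. Qed.

Lemma size_le1 (s : seq nat) : uniq s -> {in s &, forall x y, x = y} -> size s <= 1.
Proof.
case: s => [|x [|y t]] //= /andP[xn _] h.
have := h x y; rewrite !inE !eqxx orbT => /(_ isT isT) exy.
by move: xn; rewrite exy inE eqxx.
Qed.

Lemma count_L_le1 ab p : prime p -> ~~ ((p %| ab.1) && (p %| ab.2)) ->
  count (fun n => p %| Ln ab n) (iota 0 p) <= 1.
Proof.
move=> pp nab; rewrite -size_filter; apply: size_le1.
  by apply: filter_uniq; apply: iota_uniq.
have key : forall x y, x < p -> y < p -> x <= y -> p %| Ln ab x -> p %| Ln ab y -> x = y.
  move=> x y xp yp xy hx hy.
  have : p %| Ln ab y - Ln ab x by apply: dvdn_sub.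
  rewrite /Ln subnDr -mulnBr Euclid_dvdM // => /orP[pa|pyx].
    by move: nab; rewrite pa /= -(dvdn_addr _ (dvdn_mulr x pa)) hx.
  have : y - x < p by apply: leq_ltn_trans (leq_subr _ _) yp.
  move: pyx; rewrite /dvdn => /eqP + lt; rewrite modn_small // => /eqP.
  by rewrite subn_eq0 => yx; apply/eqP; rewrite eqn_leq xy.
move=> x y; rewrite !mem_filter !mem_iota !add0n /= => /andP[hx xp] /andP[hy yp].
case: (leqP x y) => xy; first exact: key.
by apply/esym/key => //; apply: ltnW.
Qed.

Lemma count_has_le (T U : Type) (P : U -> pred T) (Ls : seq U) (s : seq T) :
  count (fun n => has (P^~ n) Ls) s <= \sum_(ab <- Ls) count (P ab) s.
Proof.
elim: Ls => [|ab Ls IH] /=; first by rewrite big_nil count_pred0.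
rewrite big_cons; apply: leq_trans (leq_add (leqnn _) IH).
rewrite -count_predUI; apply: leq_trans (leq_addr _ _).
by apply: sub_count => n.
Qed.

Lemma nu_le Ls p : prime p -> (exists n : int, ~~ (p%:Z %| prodLz Ls n)%Z) ->
  nu Ls p <= size Ls.
Proof.
move=> pp [n0 hn0].
have nab : forall ab, ab \in Ls -> ~~ ((p %| ab.1) && (p %| ab.2)).
  move=> ab abin; apply/negP => /andP[/dvdnP[a' ea] /dvdnP[b' eb]].
  move: hn0; rewrite /prodLz (big_rem ab abin) /= /Lz ea eb.
  apply/negP/negPn/dvdzP; exists ((a'%:Z * n0 + b'%:Z) * \prod_(y <- rem ab Ls) Lz y n0)%R.
  by rewrite !PoszM; ring.
rewrite /nu.
rewrite (@eq_count _ _ (fun n => has (fun ab => p %| Ln ab n) Ls)); last first.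
  by move=> n; rewrite /prodLn Euclid_dvd_prod // big_has.
apply: leq_trans (count_has_le (fun ab n => p %| Ln ab n) Ls (iota 0 p)) _.
rewrite -[size Ls]sum1_size.
rewrite big_seq_cond [X in _ <= X]big_seq_cond; apply: leq_sum => ab /andP[abin _]; apply: count_L_le1 => //; apply: nab; exact: abin.
Qed.

Lemma cnt_count A T : cnt A T = count A (iota 0 T).
Proof.
rewrite /cnt -(big_mkord xpredT (fun n => (A n : nat))) -sum1_count.
by rewrite [RHS]big_mkcond /index_iota subn0 /=; apply: eq_bigr => i _; case: (A i).
Qed.

Lemma coprime_prod_primes (ps : seq nat) p : prime p -> p \notin ps -> all prime ps ->
  coprime (\prod_(q <- ps) q) p.
Proof.
move=> pp pn aps; rewrite coprime_sym prime_coprime // Euclid_dvd_prod // big_has.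
apply/hasP => -[q qin]; rewrite dvdn_prime2 //; last by move/allP: aps; apply.
by move/eqP => epq; rewrite epq qin in pn.
Qed.

Definition Qr Ls W v (ps : seq nat) (n : nat) : bool :=
  (n %% W == v) && all (fun p => p %| prodLn Ls n) ps.

Lemma Qr_per Ls W v ps M : W %| M -> all (fun p => p %| M) ps -> per (Qr Ls W v ps) M.
Proof.
move=> WM /allP aM n; rewrite /Qr modn_dvdm //; congr andb.
apply: eq_in_all => p pin /=; rewrite prodLn_dvd_mod [in RHS]prodLn_dvd_mod.
by rewrite modn_dvdm //; apply: (aM p).
Qed.

Lemma Qr_count Ls W v ps : 0 < W -> v < W -> uniq ps -> all prime ps ->
  all (coprime W) ps ->
  cnt (Qr Ls W v ps) (W * \prod_(p <- ps) p) = \prod_(p <- ps) nu Ls p.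
Proof.
move=> W0 vW; elim: ps => [|p ps IH] /=.
  move=> _ _ _; rewrite !big_nil muln1 cnt_count /Qr.
  rewrite (@eq_in_count _ _ (pred1 v)); last first.
    by move=> n; rewrite mem_iota add0n /= andbT => nW; rewrite modn_small.
  by rewrite count_uniq_mem ?iota_uniq // mem_iota vW.
move=> /andP[pn u] /andP[pp aps] /andP[cWp cWs].
have pM : forall q, q \in ps -> prime q by move=> q qin; move/allP: aps; apply.
have ps_gt0 : 0 < \prod_(q <- ps) q.
  by rewrite big_seq_cond prodn_cond_gt0 // => q /andP[qin _]; apply: prime_gt0; apply: pM.
have M0 : 0 < W * \prod_(q <- ps) q by rewrite muln_gt0 W0.
rewrite big_cons [in RHS]big_cons.
have -> : nu Ls p = cnt (fun n => p %| prodLn Ls n) p by rewrite cnt_count.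
rewrite mulnC -(IH u aps cWs).
rewrite -crt_count //.
- rewrite mulnAC -mulnA; apply: eq_bigr => n _ /=.
  by rewrite /Qr /= andbCA andbC.
- exact: prime_gt0.
- by rewrite coprime_sym coprimeMl cWp coprime_prod_primes.
- by move=> n /=; rewrite [in LHS]prodLn_dvd_mod.
- apply: Qr_per; first exact: dvdn_mulr.
  by apply/allP => q qin; apply: dvdn_mull; rewrite (big_rem q qin) dvdn_mulr.
Qed.


Lemma sum_gt_cnt (A : pred nat) a j :
  \sum_(n < (a.+1 + j) | a < n) (A n : nat) = cnt A (a.+1 + j) - cnt A a.+1.
Proof.
elim: j => [|j IH].
  rewrite addn0 subnn big_pred0 // => i; rewrite ltnNge -ltnS ltn_ord //.
rewrite addnS big_mkcond big_ord_recr /= -big_mkcond IH /cnt [in RHS]big_ord_recr /=.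
have -> : a < a.+1 + j by rewrite ltnS leq_addr.
rewrite addnBAC //; rewrite -/(cnt A _) -/(cnt A _); apply: cnt_mono; exact: leq_addr.
Qed.

Section Real.
Variable R : archiRealFieldType.
Local Open Scope ring_scope.

Lemma cnt_real_bounds A P T : (0 < P)%N -> per A P ->
  (cnt A P)%:R * T%:R / P%:R - (cnt A P)%:R <= (cnt A T)%:R :> R /\
  (cnt A T)%:R <= (cnt A P)%:R * T%:R / P%:R + (cnt A P)%:R :> R.
Proof.
move=> P0 pA; rewrite (cnt_div T pA).
set c := cnt A P; set q := (T %/ P)%N; set r := cnt A ((T %% P)%N).
have rc : (r <= c)%N by apply: cnt_mono; apply: ltnW; rewrite ltn_mod.
have Tq : T = (q * P + (T %% P)%N)%N by rewrite -divn_eq.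
have TP : ((T %% P)%N < P)%N by rewrite ltn_mod.
have Pr : 0 < P%:R :> R by rewrite ltr0n.
have hT : (T%:R / P%:R : R) = q%:R + ((T %% P)%N)%:R / P%:R.
  by rewrite {1}Tq natrD natrM mulrDl mulfK // gt_eqF.
have h1 : 0 <= ((T %% P)%N)%:R / P%:R :> R by rewrite divr_ge0 // ler0n.
have h2 : ((T %% P)%N)%:R / P%:R < 1 :> R by rewrite ltr_pdivrMr // mul1r ltr_nat.
have rc' : r%:R <= c%:R :> R by rewrite ler_nat.
have r0 : 0 <= r%:R :> R by rewrite ler0n.
have c0 : 0 <= c%:R :> R by rewrite ler0n.
rewrite -mulrA hT natrD natrM; split.
- have : c%:R * (((T %% P)%N)%:R / P%:R) <= c%:R :> R by rewrite ler_piMr // ltW.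
  set u := ((T %% P)%N)%:R / P%:R; move=> hu.
  have : 0 <= c%:R * u by rewrite mulr_ge0.
  nra.
- have : 0 <= c%:R * (((T %% P)%N)%:R / P%:R) :> R by rewrite mulr_ge0.
  set u := ((T %% P)%N)%:R / P%:R; move=> hu.
  nra.
Qed.

Lemma interval_count (A : pred nat) P (X : R) : (0 < P)%N -> per A P -> 0 <= X ->
  `| (\sum_(n < (Num.truncn (2 * X)).+1 | (X < n%:R) && (n%:R <= 2 * X)) (A n : nat))%:R
     - X * (cnt A P)%:R / P%:R | <= 3 * (cnt A P)%:R.
Proof.
move=> P0 pA X0.
set a := Num.truncn X; set M := Num.truncn (2 * X).
have X2 : 0 <= 2 * X by rewrite mulr_ge0.
have aM : (a <= M)%N by apply: le_truncn; lra.
have -> : \sum_(n < M.+1 | (X < n%:R) && (n%:R <= 2 * X)) (A n : nat)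
        = \sum_(n < a.+1 + (M - a) | (a < n)%N) (A n : nat).
  have e : M.+1 = (a.+1 + (M - a))%N by rewrite addSn subnKC.
  rewrite -e; apply: eq_bigl => n.
  rewrite -(truncn_lt_nat _ X0) -/a.
  have -> : (n%:R <= 2 * X) = true.
    by rewrite -truncn_ge_nat // -/M -ltnS ltn_ord.
  by rewrite andbT.
rewrite sum_gt_cnt.
have mono : (cnt A a.+1 <= cnt A (a.+1 + (M - a)))%N by apply: cnt_mono; apply: leq_addr.
rewrite natrB //.
have [l1 u1] := cnt_real_bounds (a.+1 + (M - a)) P0 pA.
have [l2 u2] := cnt_real_bounds a.+1 P0 pA.
set c := cnt A P in l1 u1 l2 u2 *.
have e2 : (a.+1 + (M - a))%N = M.+1 :> nat by rewrite addSn subnKC.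
rewrite e2 in l1 u1 *.
have ha := trunc_itv X0; have hM := trunc_itv X2.
rewrite -/a -/M in ha hM.
move/andP: ha => [ha1 ha2]; move/andP: hM => [hM1 hM2].
rewrite -[a.+1]addn1 -[M.+1]addn1 !natrD in l1 u1 l2 u2 ha2 hM2 *.
have Pr : 1 <= P%:R :> R by rewrite ler1n.
have c0 : 0 <= c%:R :> R by rewrite ler0n.
set cc := c%:R in l1 u1 l2 u2 c0 *.
set m := M%:R in l1 u1 hM1 hM2 *. set aa := a%:R in l2 u2 ha1 ha2 *.
set p := P%:R in l1 u1 l2 u2 Pr *.
have pinv : 0 < p^-1 <= 1 by rewrite invr_gt0 invf_le1 ?andbT; lra.
have ed : cc * (m + 1) / p - cc * (aa + 1) / p - X * cc / p = cc * p^-1 * (m - aa - X).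
  by ring.
have b1 : -1 <= m - aa - X <= 1 by lra.
have hq : `| cc * p^-1 * (m - aa - X) | <= cc.
  rewrite normrM ger0_norm ?mulr_ge0 //; last by lra.
  rewrite -[X in _ <= X]mulr1 ler_pM //; first by rewrite mulr_ge0 //; lra.
    by rewrite -[X in _ <= X]mulr1 ler_pM //; lra.
  by rewrite ler_norml; lra.
rewrite ler_norml; move: hq; rewrite ler_norml -ed; move/andP=> [q1 q2].
apply/andP; split; lra.
Qed.

End Real.

Lemma big_seq_ord (R : Type) (idx : R) (op : Monoid.com_law idx) (s : seq nat) N F :
  uniq s -> (forall x, x \in s -> x < N) ->
  \big[op/idx]_(x <- s) F x = \big[op/idx]_(i < N | (i : nat) \in s) F i.
Proof.
move=> u sN; rewrite -(big_mkord (fun i => i \in s)) -[RHS]big_filter.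
have hp : perm_eq s [seq x <- index_iota 0 N | x \in s].
  apply: uniq_perm => //; first by rewrite filter_uniq // iota_uniq.
  by move=> x; rewrite mem_filter mem_iota /= add0n subn0; case xs: (x \in s) => //=; rewrite sN.
by rewrite (perm_big _ hp).
Qed.

Lemma sum_support (R : nmodType) (s : seq nat) N (lam : nat -> R) :
  uniq s -> (forall d, lam d != 0%R -> d <= N) ->
  (\sum_(d <- s) lam d = \sum_(i < N.+1 | (i : nat) \in s) lam i)%R.
Proof.
move=> u sup; rewrite (bigID (fun d => d < N.+1)) /= [X in (_ + X)%R]big1 ?addr0; last first.
  by move=> d hd; apply/eqP; apply/negPn/negP => /sup dN; rewrite ltnS dN in hd.
rewrite -big_filter (@big_seq_ord _ _ _ _ N.+1) ?filter_uniq //; last by move=> x; rewrite mem_filter => /andP[].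
by apply: eq_bigl => i; rewrite mem_filter ltn_ord.
Qed.

Lemma cong_nat (n W : nat) (v0 : int) : 0 < W ->
  (n%:Z == v0 %[mod W%:Z])%Z = (n %% W == `|(v0 %% W%:Z)%Z|%N).
Proof.
move=> W0; rewrite modz_nat -eqz_nat gez0_abs //; apply: modz_ge0.
by rewrite eqz_nat -lt0n.
Qed.

Lemma prod_le_pow (ps : seq nat) (f : nat -> nat) k :
  (forall p, p \in ps -> f p <= k) -> \prod_(p <- ps) f p <= k ^ size ps.
Proof.
elim: ps => [|p ps IH] h; first by rewrite big_nil.
rewrite big_cons expnS leq_mul //; first by apply: h; rewrite inE eqxx.
by apply: IH => q qin; apply: h; rewrite inE qin orbT.
Qed.

Lemma primes_coprime d W p : coprime d W -> p \in primes d -> coprime W p.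
Proof.
move=> cdW; rewrite mem_primes => /and3P[_ _ pd].
by rewrite coprime_sym; apply: coprime_dvdl pd cdW.
Qed.

Section Asm.
Variable R : archiRealFieldType.
Local Open Scope ring_scope.

Lemma de_count (X : R) (W κ : nat) Ls (v0 : int) d e :
  0 <= X -> (0 < W)%N -> (1 <= κ)%N -> squarefree d -> squarefree e ->
  coprime d W -> coprime e W ->
  (forall p, p \in primes d ++ primes e -> nu Ls p <= κ)%N ->
  `| (\sum_(n < (Num.truncn (2 * X)).+1 | (X < n%:R) && (n%:R <= 2 * X)
           && (n%:Z == v0 %[mod W%:Z])%Z)
        (((d %| prodLn Ls n) && (e %| prodLn Ls n))%N : nat)%:R)
     - X / W%:R * \prod_(p <- primes (d * e)) ((nu Ls p)%:R / p%:R) |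
  <= 3 * κ%:R ^+ (size (primes d) + size (primes e)).
Proof.
move=> X0 W0 k1 sd se cdW ceW hnu.
have d0 : (0 < d)%N by case/andP: sd.
have e0 : (0 < e)%N by case/andP: se.
set ps := primes (d * e).
have psE : ps =i primes d ++ primes e by move=> p; rewrite mem_cat primesM.
have ups : uniq ps by apply: primes_uniq.
have aps : all prime ps by apply/allP => p; apply: primes_prime.
have cps : all (coprime W) ps.
  apply/allP => p; rewrite psE mem_cat => /orP[] h.
  - exact: primes_coprime h.
  - exact: primes_coprime h.
set v := `|(v0 %% W%:Z)%Z|%N.
have vW : (v < W)%N.
  rewrite -ltz_nat /v gez0_abs; first by apply: ltz_pmod; rewrite ltz_nat.
  by apply: modz_ge0; rewrite eqz_nat -lt0n.
have m0 : (0 < \prod_(p <- ps) p)%N.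
  rewrite big_seq_cond prodn_cond_gt0 // => p /andP[pin _].
  by apply: prime_gt0; move/allP: aps; apply.
set P := (W * \prod_(p <- ps) p)%N.
have P0 : (0 < P)%N by rewrite muln_gt0 W0.
have pQ : per (Qr Ls W v ps) P.
  apply: Qr_per; first exact: dvdn_mulr.
  by apply/allP => q qin; apply: dvdn_mull; rewrite (big_rem q qin) dvdn_mulr.
have cQ := Qr_count Ls W0 vW ups aps cps.
have hI := @interval_count R (Qr Ls W v ps) P X P0 pQ X0.
rewrite cQ in hI.
rewrite -natr_sum big_mkcondr /=.
rewrite (eq_bigr (fun n : 'I__ => (Qr Ls W v ps n : nat))); last first.
  move=> n _; rewrite cong_nat // -/v /Qr.
  case: (_ == v) => //=.
  rewrite (sqfree_dvd _ sd) (sqfree_dvd _ se) -all_cat.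
  by rewrite (eq_all_r psE).
apply: le_trans.
  have -> : X / W%:R * \prod_(p <- ps) ((nu Ls p)%:R / p%:R)
          = X * (\prod_(p <- ps) nu Ls p)%:R / P%:R.
    rewrite prodf_div /P natrM !natr_prod invfM; ring.
  exact: hI.
rewrite ler_pM2l // -natrX ler_nat.
apply: leq_trans (prod_le_pow (f := nu Ls) (ps := ps) (k := κ) _) _.
  by move=> p pin; apply: hnu; rewrite -psE.
rewrite leq_pexp2l // -size_cat; apply: uniq_leq_size => // p; by rewrite psE.
Qed.

Lemma nu_le_k Ls κ d p : P3_admissible Ls -> (size Ls <= κ)%N -> inP3 d ->
  p \in primes d -> (nu Ls p <= κ)%N.
Proof.
move=> adm sk /andP[_ /allP h3] pin.
have pp := primes_prime pin.
apply: leq_trans sk; apply: nu_le => //; apply: adm => //.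
by apply/eqP; apply: h3.
Qed.

Lemma assembly (X Λ : R) (N W κ : nat) Ls (v0 : int) (lam : nat -> R) :
  0 <= X -> (0 < W)%N -> (size Ls <= κ)%N -> (1 <= κ)%N -> P3_admissible Ls ->
  (forall ab, ab \in Ls -> 0 < ab.2)%N ->
  (forall d, lam d != 0 -> [/\ (d <= N)%N, squarefree d, inP3 d & coprime d W]) ->
  (forall d, `|lam d| <= Λ) ->
  `| \sum_(n < (Num.truncn (2 * X)).+1 | (X < n%:R) && (n%:R <= 2 * X)
            && (n%:Z == v0 %[mod W%:Z])%Z) wn' Ls W v0 lam n
     - X / W%:R * \sum_(d < N.+1) \sum_(e < N.+1)
          lam d * lam e * \prod_(p <- primes (d * e)) ((nu Ls p)%:R / p%:R) |
  <= 3 * Λ ^+ 2 * (\sum_(d < N.+1 | squarefree d) (κ%:R ^+ size (primes d))) ^+ 2.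
Proof.
move=> X0 W0 sk k1 adm b0 hlam hΛ.
have sup : forall d, lam d != 0 -> (d <= N)%N by move=> d /hlam[].
have Pn0 : forall n, (0 < prodLn Ls n)%N.
  move=> n; rewrite /prodLn big_seq_cond prodn_cond_gt0 // => ab /andP[abin _].
  by rewrite /Ln ltn_addl // b0.
have wE : forall n, (n%:Z == v0 %[mod W%:Z])%Z -> wn' Ls W v0 lam n =
    \sum_(d < N.+1) \sum_(e < N.+1)
       lam d * lam e * (((d %| prodLn Ls n) && (e %| prodLn Ls n))%N : nat)%:R.
  move=> n hc; rewrite /wn' hc (sum_support (divisors_uniq _) sup).
  have -> : \sum_(i < N.+1 | (i : nat) \in divisors (prodLn Ls n)) lam i
          = \sum_(i < N.+1) lam i * ((i %| prodLn Ls n) : nat)%:R.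
    rewrite big_mkcond; apply: eq_bigr => i _ /=.
    by rewrite -dvdn_divisors //; case: (i %| prodLn Ls n)%N; rewrite ?mulr1 ?mulr0.
  rewrite expr2 big_distrl; apply: eq_bigr => d _ /=.
  rewrite big_distrr; apply: eq_bigr => e _ /=.
  by rewrite -mulnb natrM; ring.
under eq_bigr => n /andP[_ hn] do rewrite (wE n hn).
rewrite exchange_big /=; under eq_bigr do rewrite exchange_big /=.
under eq_bigr do under eq_bigr do rewrite -mulr_sumr.
rewrite mulr_sumr; under [X in _ - X]eq_bigr do rewrite mulr_sumr.
rewrite -sumrB; under [X in `|X|]eq_bigr => i _ do rewrite -sumrB.
apply: le_trans (ler_norm_sum _ _ _) _.
set F := fun d : nat => if squarefree d then κ%:R ^+ size (primes d) else 0 : R.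
have F0 : forall d, 0 <= F d by move=> d; rewrite /F; case: ifP => // _; rewrite exprn_ge0 // ler0n.
have -> : 3 * Λ ^+ 2 * (\sum_(d < N.+1 | squarefree d) κ%:R ^+ size (primes d)) ^+ 2
        = \sum_(d < N.+1) \sum_(e < N.+1) 3 * Λ ^+ 2 * (F d * F e).
  rewrite big_mkcond [X in _ * X]expr2 big_distrl mulr_sumr; apply: eq_bigr => d _ /=.
  rewrite big_distrr mulr_sumr; apply: eq_bigr => e _ /=.
  by [].
have L0 : 0 <= Λ by apply: le_trans (hΛ 0%N).
apply: ler_sum => d _; apply: le_trans (ler_norm_sum _ _ _) _.
apply: ler_sum => e _.
rewrite mulrCA -mulrBr normrM.
have hprod : `|lam d * lam e| <= Λ ^+ 2.
  by rewrite normrM expr2 ler_pM.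
case: (eqVneq (lam d) 0) => [->|hd].
  by rewrite !mul0r normr0 mul0r mulr_ge0 ?mulr_ge0 // exprn_ge0.
case: (eqVneq (lam e) 0) => [->|he].
  by rewrite mulr0 normr0 mul0r mulr_ge0 ?mulr_ge0 // exprn_ge0.
have [dN sd p3d cd] := hlam d hd.
have [eN se p3e ce] := hlam e he.
have hc := @de_count X W κ Ls v0 d e X0 W0 k1 sd se cd ce.
have hnu : (forall p, p \in primes d ++ primes e -> nu Ls p <= κ)%N.
  move=> p; rewrite mem_cat => /orP[] h.
  - exact: (nu_le_k adm sk p3d h).
  - exact: (nu_le_k adm sk p3e h).
move: (hc hnu) => {}hc.
rewrite /F sd se -exprD.
have -> : 3 * Λ ^+ 2 * κ%:R ^+ (size (primes d) + size (primes e))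
        = Λ ^+ 2 * (3 * κ%:R ^+ (size (primes d) + size (primes e))) by ring.
by apply: ler_pM.
Qed.

End Asm.
Local Open Scope ring_scope.

Section RK.
Variable R : realType.

Lemma powR_expR (a x : R) : 0 < a -> a `^ x = expR (x * ln a).
Proof. by move=> a0; rewrite /powR gt_eqF. Qed.

Lemma key_ineq (t δ : R) : 2 <= t -> 0 < δ ->
  (t `^ (1 + δ))^-1 <= δ^-1 * (((t - 1) `^ δ)^-1 - (t `^ δ)^-1).
Proof.
move=> t2 d0.
have t0 : 0 < t by lra.
have t10 : 0 < t - 1 by lra.
set u := t `^ δ; set w := (t - 1) `^ δ.
have u0 : 0 < u by apply: powR_gt0.
have w0 : 0 < w by apply: powR_gt0.
have -> : t `^ (1 + δ) = t * u.
  by rewrite powRD ?powRr1 ?(ltW t0) //; apply/implyP => _; rewrite gt_eqF.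
have hB : ln (t - 1) <= ln t - t^-1.
  have e : t - 1 = t * (1 + - t^-1) by rewrite mulrDr mulr1 mulrN divff ?gt_eqF.
  rewrite e lnM ?posrE //; last by rewrite subr_gt0 invf_lt1 //; lra.
  have : ln (1 + - t^-1) <= - t^-1.
    apply: le_ln1Dx; rewrite ltrN2 invf_lt1 //; lra.
  lra.
have key : w * (1 + δ / t) <= u.
  rewrite /w /u !powR_expR //.
  apply: le_trans (ler_wpM2l (expR_ge0 _) (expR_ge1Dx (δ / t))) _.
  rewrite -expRD ler_expR.
  have : δ * ln (t - 1) <= δ * (ln t - t^-1) by rewrite ler_pM2l.
  rewrite mulrBr mulrC; lra.
have e1 : (t * u)^-1 = δ^-1 * (δ / (t * u)) by rewrite mulrA mulVf ?gt_eqF // mul1r.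
rewrite e1 ler_pM2l ?invr_gt0 //.
have e2 : w^-1 - u^-1 = (u - w) / (u * w) by field; rewrite !gt_eqF.
rewrite e2 ler_pdivlMr ?mulr_gt0 // mulrAC ler_pdivrMr ?mulr_gt0 //.
have : w * (t + δ) <= t * u.
  have : w * (1 + δ / t) * t <= u * t by rewrite ler_pM2r.
  have -> : w * (1 + δ / t) * t = w * (t + δ) by field; rewrite gt_eqF.
  by rewrite [t * u]mulrC.
nra.
Qed.

Lemma tele (δ : R) m : 0 < δ ->
  \sum_(i < m.+2 | (2 <= i)%N) ((i%:R : R) `^ (1 + δ))^-1
    <= δ^-1 * (1 - ((m.+1%:R : R) `^ δ)^-1).
Proof.
move=> d0; elim: m => [|m IH].
  rewrite big_pred0; last by case=> [[|[|]]].
  by rewrite powR1 invr1 subrr mulr0.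
rewrite big_mkcond big_ord_recr /= -big_mkcond /=.
have t2 : 2 <= (m.+2%:R : R) by rewrite ler_nat.
have := key_ineq t2 d0.
have -> : (m.+2%:R : R) - 1 = m.+1%:R by rewrite -[m.+2]addn1 natrD addrK.
move=> hk.
apply: le_trans (lerD IH hk) _.
by rewrite -mulrDr addrA subrK.
Qed.

Lemma tele_le (δ : R) N : 0 < δ ->
  \sum_(i < N.+1 | (2 <= i)%N) ((i%:R : R) `^ (1 + δ))^-1 <= δ^-1.
Proof.
move=> d0; case: N => [|m].
  by rewrite big_pred0 ?invr_ge0 ?ltW //; case=> [[|]].
apply: le_trans (tele m d0) _.
rewrite -[X in _ <= X]mulr1; apply: ler_wpM2l; first by rewrite invr_ge0 ltW.
have : 0 <= ((m.+1%:R : R) `^ δ)^-1 by rewrite invr_ge0 powR_ge0.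
lra.
Qed.

Lemma prod_const_seq (ps : seq nat) (c : R) : \prod_(p <- ps) c = c ^+ size ps.
Proof. by elim: ps => [|p ps IH]; rewrite ?big_nil ?big_cons ?IH ?exprS. Qed.

Lemma powR_prod (ps : seq nat) (x : nat -> R) s : (forall p, 0 <= x p) ->
  (\prod_(p <- ps) x p) `^ s = \prod_(p <- ps) (x p `^ s).
Proof.
move=> x0; elim: ps => [|p ps IH]; first by rewrite !big_nil powR1.
rewrite !big_cons powRM ?IH //; apply: prodr_ge0 => i _; exact: x0.
Qed.

Lemma rankin (N κ : nat) (δ : R) : 0 < δ -> (1 <= κ)%N ->
  \sum_(d < N.+1 | squarefree d) (κ%:R ^+ size (primes d) : R)
    <= (N%:R : R) `^ (1 + δ) * expR (κ%:R / δ).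
Proof.
move=> d0 k1.
set s := 1 + δ.
pose G (p : nat) : R := κ%:R * (((p%:R : R) `^ s)^-1).
pose H (i : 'I_N.+1) : R := if prime i then G i else 0.
have G0 : forall p, 0 <= G p by move=> p; rewrite mulr_ge0 ?ler0n ?invr_ge0 ?powR_ge0.
have H0 : forall i, 0 <= H i by move=> i; rewrite /H; case: ifP.
pose Phi (J : {set 'I_N.+1}) : R := \prod_i (if i \in J then H i else 1).
have Phi0 : forall J, 0 <= Phi J.
  by move=> J; apply: prodr_ge0 => i _; case: ifP => _ //; apply: H0.
pose phi (d : 'I_N.+1) : {set 'I_N.+1} := [set i : 'I_N.+1 | (i : nat) \in primes d].
have Nle : forall (d : 'I_N.+1) p, p \in primes d -> (p < N.+1)%N.
  move=> d p; rewrite mem_primes => /and3P[_ dp pd].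
  by apply: leq_ltn_trans (dvdn_leq dp pd) (ltn_ord d).
have R1 : forall d : 'I_N.+1, squarefree d ->
    κ%:R ^+ size (primes d) <= (N%:R : R) `^ s * Phi (phi d).
  move=> d sd.
  have dpos : (0 < d)%N by case/andP: sd.
  have -> : Phi (phi d) = \prod_(p <- primes d) G p.
    rewrite (@big_seq_ord _ _ _ _ N.+1) ?primes_uniq //; last exact: Nle.
    rewrite /Phi [RHS]big_mkcond; apply: eq_bigr => i _ /=.
    rewrite /phi inE; case: ifP => // h.
    by rewrite /H (primes_prime h).
  rewrite /G big_split /= prod_const_seq prodfV -powR_prod; last by move=> p; apply: ler0n.
  rewrite -natr_prod -(sqfree_prod sd).
  have dp : 0 < (d%:R : R) `^ s by apply: powR_gt0; rewrite ltr0n.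
  have dN : (d%:R : R) `^ s <= (N%:R : R) `^ s.
    apply: ge0_ler_powR; rewrite ?nnegrE ?ler0n //; first by rewrite /s; lra.
    by rewrite ler_nat -ltnS.
  rewrite mulrCA -[X in X <= _]mulr1; apply: ler_wpM2l; first by rewrite exprn_ge0 ?ler0n.
  by rewrite ler_pdivlMr // mul1r.
have R3 : \sum_(d < N.+1 | squarefree d) Phi (phi d) <= \prod_(i < N.+1) (H i + 1).
  rewrite bigA_distr.
  have inj : {in [pred d : 'I_N.+1 | squarefree d] &, injective phi}.
    move=> d1 d2; rewrite !inE => s1 s2 e.
    have pe : primes d1 =i primes d2.
      move=> p; case: (ltnP p N.+1) => pN.
        have := congr1 (fun J : {set 'I_N.+1} => Ordinal pN \in J) e.
        by rewrite /phi /= !inE.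
      case h1: (p \in primes d1); case h2: (p \in primes d2) => //.
      - by have := Nle _ _ h1; rewrite ltnNge pN.
      - by have := Nle _ _ h2; rewrite ltnNge pN.
    have := irr_sorted_eq ltn_trans ltnn (sorted_primes d1) (sorted_primes d2) pe.
    move=> ep; apply: val_inj => /=.
    by rewrite (sqfree_prod s1) (sqfree_prod s2) ep.
  have -> : \sum_(d < N.+1 | squarefree d) Phi (phi d)
          = \sum_(d in [pred d : 'I_N.+1 | squarefree d]) Phi (phi d) by [].
  rewrite -(big_imset _ inj).
  rewrite [X in _ <= X](bigID (fun J => J \in [set phi x | x in [pred d : 'I_N.+1 | squarefree d]])) /=.
  rewrite -[X in X <= _]addr0; apply: lerD.
    by [].
  by apply: sumr_ge0 => J _; apply: Phi0.
have R4 : \prod_(i < N.+1) (H i + 1) <= expR (\sum_(i < N.+1) H i).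
  rewrite expR_sum; apply: ler_prod => i _.
  by rewrite addr_ge0 ?H0 //= addrC expR_ge1Dx.
have R5 : \sum_(i < N.+1) H i <= κ%:R / δ.
  apply: (@le_trans _ _ (\sum_(i < N.+1 | (2 <= i)%N) G i)).
    rewrite [X in _ <= X]big_mkcond; apply: ler_sum => i _ /=.
    rewrite /H; case: ifP => pi; first by rewrite prime_gt1.
    by case: ifP.
  rewrite /G -mulr_sumr; apply: ler_wpM2l; first by rewrite ler0n.
  exact: tele_le.
have pN : 0 <= (N%:R : R) `^ s by apply: powR_ge0.
apply: (@le_trans _ _ (\sum_(d < N.+1 | squarefree d) (N%:R : R) `^ s * Phi (phi d))).
  by apply: ler_sum => d sd; apply: R1.
rewrite -mulr_sumr; apply: ler_wpM2l => //.
apply: le_trans R3 _; apply: le_trans R4 _.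
by rewrite ler_expR.
Qed.


End RK.

Lemma asymp (R : realType) (eps L y : R) (k κ : nat) : 0 < eps -> 1 <= y -> y ^+ 5 = L ->
  1 + 5 * (5 + 2 / eps) / (4 * eps) <= y -> k%:R <= y -> κ%:R <= y ->
  0 <= ln L -> ln L <= 5 * y ->
  k%:R * ln L + 2 * κ%:R / eps <= 4 * eps / 5 * L.
Proof.
move=> e0 y1 yL hY ky κy l0 l5.
set ie := eps^-1.
have ie0 : 0 < ie by rewrite invr_gt0.
have eie : eps * ie = 1 by rewrite divff ?gt_eqF.
have k0 : 0 <= k%:R :> R by rewrite ler0n.
have h1 : k%:R * ln L <= 5 * y ^+ 2.
  apply: (@le_trans _ _ (y * ln L)); first by apply: ler_wpM2r.
  by rewrite expr2; nra.
have h2 : 2 * κ%:R / eps <= 2 * y ^+ 2 * ie.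
  apply: ler_wpM2r; first exact: ltW.
  rewrite expr2; nra.
have eY : 4 * eps / 5 * (1 + 5 * (5 + 2 / eps) / (4 * eps)) = 4 * eps / 5 + (5 + 2 * ie).
  by rewrite /ie; field; rewrite gt_eqF.
have y3 : y <= y ^+ 3 by rewrite !exprS expr0 mulr1; nra.
have h3 : 5 + 2 * ie <= 4 * eps / 5 * y ^+ 3.
  have : 4 * eps / 5 * (1 + 5 * (5 + 2 / eps) / (4 * eps)) <= 4 * eps / 5 * y ^+ 3.
    rewrite ler_wpM2l //; first by rewrite divr_ge0 // mulr_ge0 // ltW.
    lra.
  rewrite eY.
  have : 0 <= 4 * eps / 5 by rewrite divr_ge0 // mulr_ge0 // ltW.
  lra.
have y20 : 0 <= y ^+ 2 by rewrite exprn_ge0 //; lra.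
have : y ^+ 2 * (5 + 2 * ie) <= y ^+ 2 * (4 * eps / 5 * y ^+ 3) by rewrite ler_wpM2l.
have -> : y ^+ 2 * (4 * eps / 5 * y ^+ 3) = 4 * eps / 5 * L.
  by rewrite -yL; ring.
have -> : y ^+ 2 * (5 + 2 * ie) = 5 * y ^+ 2 + 2 * y ^+ 2 * ie by ring.
move=> hh; apply: le_trans hh; exact: lerD.
Qed.

Lemma wnE (R : realType) Ls W v0 (lam : nat -> R) n : wn Ls W v0 lam n = wn' Ls W v0 lam n.
Proof. by []. Qed.

Unset Implicit Arguments. Set Strict Implicit. Set Printing Implicit Defensive.

Theorem lemma5 (R : realType) (c0 : R) (Cbv : R -> R) (C : R) :
  0 < c0 ->
  forall eps : R, 0 < eps ->
  exists K X0 : R, forall X : R, X0 <= X ->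
  forall (p0 : nat) (Ls : seq (nat * nat)) (v0 : int) (lam : nat -> R),
    let k := size Ls in
    let W := Wof (2 * (ln X) `^ (3^-1)) p0 in
    (* hypotheses on p0 *)
    prime p0 ->
    ln (ln X) / 2 <= p0%:R -> p0%:R <= X ->
    (forall e : R, 0 < e ->
       \sum_(q < (Num.truncn (X `^ (2^-1 - e))).+1 |
               (0 < q)%N && (q%:R < X `^ (2^-1 - e)) && coprime q p0)
          BVerr X q
       <= Cbv e * X * expR (- c0 * Num.sqrt (ln X))) ->
    (* hypotheses on the linear forms *)
    k%:R <= (ln X) `^ (5^-1) ->
    uniq Ls ->
    (forall ab, ab \in Ls ->
       [/\ (0 < ab.1)%N, ab.1%:R <= (ln X) `^ (3^-1), coprime (2 * p0) ab.1,
           (0 < ab.2)%N & ab.2%:R < X]) ->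
    P3_admissible Ls ->
    (* v0 *)
    (forall ab, ab \in Ls -> gcdz (Lz ab v0) W%:Z = 1) ->
    (* sieve weights *)
    (forall d : nat, lam d != 0 ->
       [/\ d%:R <= X `^ (10^-1), squarefree d, inP3 d & coprime d (p0 * W)]) ->
    (forall d : nat, `|lam d| <= C * (ln X) `^ (k%:R / 2)) ->
    `| \sum_(n < (Num.truncn (2 * X)).+1 |
              (X < n%:R) && (n%:R <= 2 * X) && (n%:Z == v0 %[mod W%:Z])%Z)
          wn Ls W v0 lam n
       - X / W%:R *
         \sum_(d < (Num.truncn (X `^ (10^-1))).+1)
         \sum_(e < (Num.truncn (X `^ (10^-1))).+1)
            lam d * lam e *
            \prod_(p <- primes (d * e)) ((nu Ls p)%:R / p%:R) |
    <= K * X `^ (5^-1 + eps).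
Proof.
move=> c00 eps eps0.
set Y := 1 + 5 * (5 + 2 / eps) / (4 * eps).
have Y1 : 1 <= Y.
  rewrite /Y lerDl; apply: divr_ge0; last by apply: mulr_ge0 => //; exact: ltW.
  apply: mulr_ge0 => //; apply: addr_ge0 => //; apply: divr_ge0 => //; exact: ltW.
exists (3 * C ^+ 2), (expR (Y ^+ 5)).
move=> X hX p0 Ls v0 lam k W pp0 hp01 hp02 hBV hk uLs hLs adm hv0 hlam hC.
have X0 : 0 < X by apply: lt_le_trans (expR_gt0 _) hX.
set L := ln X.
have LY : Y ^+ 5 <= L by rewrite /L -ler_expR lnK ?posrE.
have L1 : 1 <= L by apply: le_trans LY; apply: exprn_ege1.
have L0 : 0 < L by lra.
set y := L `^ (5^-1).
have y0 : 0 <= y by apply: powR_ge0.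
have yL : y ^+ 5 = L.
  rewrite -powR_mulrn // -powRrM mulVf ?powRr1 //; lra.
have yY : Y <= y.
  have e : (Y ^+ 5) `^ (5^-1) = Y.
    rewrite -powR_mulrn; last lra.
    by rewrite -powRrM mulfV ?powRr1 ?pnatr_eq0 //; lra.
  rewrite -e /y; apply: ge0_ler_powR => //.
  all: rewrite ?nnegrE ?invr_ge0 ?ler0n //.
  all: try lra.
  by apply: exprn_ge0; lra.
have y1 : 1 <= y by lra.
have lnL0 : 0 <= ln L by apply: ln_ge0.
have lnL5 : ln L <= 5 * y.
  have : ln y <= y - 1.
    have := @le_ln1Dx _ (y - 1); rewrite [1 + _]addrC subrK; apply; lra.
  have -> : ln L = 5 * ln y.
    by rewrite /y ln_powR mulrA mulfV ?mul1r // pnatr_eq0.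
  lra.
have W0 : (0 < W)%N.
  rewrite /W /Wof prodn_cond_gt0 // => i /andP[/andP[/andP[pi _] _] _].
  exact: prime_gt0.
set κ := maxn k 1.
set N := Num.truncn (X `^ (10^-1)).
have hlam' : forall d, lam d != 0 ->
    [/\ (d <= N)%N, squarefree d, inP3 d & coprime d W].
  move=> d /hlam[dX sd p3 cd]; split => //.
    by rewrite /N truncn_ge_nat // powR_ge0.
  by move: cd; rewrite coprimeMr => /andP[].
have hb : forall ab, ab \in Ls -> (0 < ab.2)%N by move=> ab /hLs[].
have hA := @assembly R X (C * L `^ (k%:R / 2)) N W κ Ls v0 lam (ltW X0) W0
   (leq_maxl k 1) (leq_maxr k 1) adm hb hlam' hC.
under eq_bigr do rewrite wnE.
apply: le_trans hA _.
set G := \sum_(d < N.+1 | squarefree d) (κ%:R ^+ size (primes d) : R).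
have G0 : 0 <= G by apply: sumr_ge0 => d _; rewrite exprn_ge0 ?ler0n.
have Gb : G <= expR ((1 + eps) / 10 * L + κ%:R / eps).
  apply: le_trans (rankin N eps0 (leq_maxr k 1)) _.
  rewrite expRD; apply: ler_wpM2r; first exact: expR_ge0.
  have NX : (N%:R : R) <= X `^ (10^-1) by rewrite /N truncn_le powR_ge0.
  apply: (@le_trans _ _ ((X `^ (10^-1)) `^ (1 + eps))).
    by apply: ge0_ler_powR; rewrite ?nnegrE ?ler0n ?powR_ge0 //; lra.
  rewrite -powRrM powR_expR //.
  by rewrite ler_expR /L [(1 + eps) / 10]mulrC.
have Lk : L `^ (k%:R / 2) = expR (k%:R / 2 * ln L) by rewrite powR_expR.
rewrite Lk.
set e1 := expR (k%:R / 2 * ln L).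
have e10 : 0 <= e1 by apply: expR_ge0.
have -> : 3 * (C * e1) ^+ 2 * G ^+ 2 = 3 * C ^+ 2 * (e1 * G) ^+ 2 by ring.
apply: ler_wpM2l; first by rewrite mulr_ge0 // sqr_ge0.
have ub : e1 * G <= expR (k%:R / 2 * ln L + ((1 + eps) / 10 * L + κ%:R / eps)).
  by rewrite expRD ler_wpM2l.
apply: (@le_trans _ _ ((expR (k%:R / 2 * ln L + ((1 + eps) / 10 * L + κ%:R / eps))) ^+ 2)).
  by rewrite ler_sqr ?nnegrE ?mulr_ge0 ?expR_ge0.
rewrite -expRM_natr powR_expR // ler_expR.
have κy : κ%:R <= y.
  have [->|->] : κ = k \/ κ = 1%N by rewrite /κ /maxn; case: ifP => _; [right|left].
  - exact: hk.
  - exact: y1.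
have := asymp eps0 y1 yL yY hk κy lnL0 lnL5.
rewrite -/L; lra.
Qed.
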